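(* Let $V$ be a poset, $m$ a maximal node of $V$ of positive height, and let $U$ be a splitting of $V$ at $m$ with splitting map $\varphi$. Then $\dim U=\dim V$ and $\varphi(\min U)=\min V$.
   Context: $\dim$ of a poset is the supremum of lengths of chains; the height of a node $u$ is the dimension of $\{v: v\le u\}$. A poset map is an order-preserving map. Given a poset $V$ with a maximal node $m$ of positive height, a poset $U$ is a splitting of $V$ at $m$ if there exist a finite nonempty set $\mathcal M\subseteq\max U$ of nodes of positive height and a surjective poset map $\varphi:U\to V$ (called a splitting map) such that: (1) $\varphi^{-1}(m)=\mathcal M$ and $|\varphi^{-1}(v)|=1$ for all $v\neq m$; (2) whenever $\varphi(x')=x\le y$ with $x'\in U$, $x,y\in V$, there exists $y'\in U$ with $x'\le y'$ and $\varphi(y')=y$. *)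

(* Defs.v *)
From HB Require Import structures.
From mathcomp Require Import all_boot all_order.
From Stdlib Require Import ClassicalEpsilon.
Set Implicit Arguments. Unset Strict Implicit. Unset Printing Implicit Defensive.
Import Order.TTheory.
Local Open Scope order_scope.

(* Extended naturals: [Some k] is the natural k, [None] is +infinity. *)
Definition natinf := option nat.

Section Posets.
Context {disp : Order.disp_t} {T : porderType disp}.

Definition chain_len_in (A : T -> Prop) (n : nat) : Prop :=
  exists c : nat -> T,
    (forall i, (i < n)%N -> c i < c i.+1) /\ (forall i, (i <= n)%N -> A (c i)).

Definition is_dim_in (A : T -> Prop) (d : natinf) : Prop :=
  match d with
  | None => forall n, chain_len_in A n
  | Some k => (forall n, chain_len_in A n -> (n <= k)%N) /\
              (forall j, (forall n, chain_len_in A n -> (n <= j)%N) -> (k <= j)%N)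
  end.

(* The supremum always exists (classically); dim_in picks it. *)
Definition dim_in (A : T -> Prop) : natinf :=
  epsilon (inhabits None) (is_dim_in A).

Definition dim : natinf := dim_in (fun _ => True).

Definition height (u : T) : natinf := dim_in (fun v => v <= u).

Definition maximal (x : T) : Prop := forall y, x <= y -> y = x.
Definition minimal (x : T) : Prop := forall y, y <= x -> y = x.

End Posets.
Arguments dim {disp} T.

Definition splitting_map {d1 d2 : Order.disp_t} {V : porderType d1}
    {U : porderType d2} (m : V) (M : seq U) (phi : U -> V) : Prop :=
  M <> [::] /\ uniq M /\
  (forall x, x \in M -> maximal x /\ height x <> Some 0%N) /\
  {homo phi : x y / x <= y} /\
  (forall v, exists u, phi u = v) /\
  (forall x, phi x = m <-> x \in M) /\
  (forall x y, phi x = phi y -> phi x <> m -> x = y) /\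
  (forall (x' : U) (y : V), phi x' <= y -> exists y', x' <= y' /\ phi y' = y).

(* Main.v *)
Require Import Defs.
From mathcomp Require Import all_boot all_order.
From Stdlib Require Import ClassicalEpsilon FunctionalExtensionality PropExtensionality.
Import Order.TTheory.
Local Open Scope order_scope.

Lemma is_dim_uniq {d} {T : porderType d} (A : T -> Prop) d1 d2 :
  is_dim_in A d1 -> is_dim_in A d2 -> d1 = d2.
Proof.
case: d1 => [k|]; case: d2 => [j|] //=.
- move=> [H1 H2] [H3 H4]; congr Some; apply/eqP; rewrite eqn_leq.
  by rewrite (H2 _ H3) (H4 _ H1).
- by move=> [H1 _] H; have := H1 _ (H k.+1); rewrite ltnn.
- by move=> H [H1 _]; have := H1 _ (H j.+1); rewrite ltnn.
Qed.

Lemma dim_in_spec {d} {T : porderType d} (A : T -> Prop) x :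
  is_dim_in A x -> dim_in A = x.
Proof.
move=> H; rewrite /dim_in.
have := epsilon_spec (inhabits None) (is_dim_in A) (ex_intro _ x H).
by move=> H'; apply: is_dim_uniq H' H.
Qed.

Lemma height_min {d} {T : porderType d} (x : T) : minimal x -> height x = Some 0%N.
Proof.
move=> Hm; apply: dim_in_spec; split => //.
move=> [|n] // [c [Hc1 Hc2]].
have h01 := Hc1 0%N isT.
have h1 : c 1%N <= x := Hc2 1%N isT.
have h0 : c 0%N <= x := Hc2 0%N isT.
have e := Hm _ h0. rewrite e in h01.
by have := lt_le_trans h01 h1; rewrite ltxx.
Qed.

Lemma dim_eq_of {d1 d2} {T1 : porderType d1} {T2 : porderType d2}
  (A : T1 -> Prop) (B : T2 -> Prop) :
  (forall n, chain_len_in A n <-> chain_len_in B n) -> dim_in A = dim_in B.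
Proof.
move=> H.
have E : is_dim_in A = is_dim_in B.
  apply: functional_extensionality => x; apply: propositional_extensionality.
  case: x => [k|] /=.
  - split=> [[H1 H2]|[H1 H2]]; split.
    + by move=> n /H; apply: H1.
    + by move=> j Hj; apply: H2 => n /H; apply: Hj.
    + by move=> n /H; apply: H1.
    + by move=> j Hj; apply: H2 => n /H; apply: Hj.
  - by split=> Hn n; apply/H.
by rewrite /dim_in E.
Qed.

Theorem lemma4p4 (d1 d2 : Order.disp_t) (V : porderType d1) (U : porderType d2)
    (m : V) (M : seq U) (phi : U -> V) :
  maximal m -> height m <> Some 0%N ->
  splitting_map m M phi ->
  dim U = dim V /\
  (forall u : U, minimal u -> minimal (phi u)) /\
  (forall v : V, minimal v -> exists u : U, minimal u /\ phi u = v).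
Proof.
move=> Hmax Hh [_ [_ [HM [Hhomo [Hsurj [Hfib [Hinj Hup]]]]]]].
have Hstrict : forall x y, x < y -> phi x < phi y.
  move=> x y Hxy; rewrite lt_neqAle Hhomo ?(ltW Hxy) // andbT.
  apply/eqP => E.
  have [Em|Nm] := boolP (phi x == m).
  - have [Hx _] := HM x (proj1 (Hfib x) (eqP Em)).
    have := Hx y (ltW Hxy) => ey; by rewrite ey ltxx in Hxy.
  - have Nm' : phi x <> m by move=> e; rewrite e eqxx in Nm.
    have ex := Hinj x y E Nm'.
    by rewrite ex ltxx in Hxy.
split; last split.
- apply: dim_eq_of => n; split.
  + move=> [c [Hc _]]; exists (phi \o c); split => // i Hi; exact: Hstrict (Hc i Hi).
  + move=> [c [Hc _]].
    suff [c' [Hc1 Hc2]] : exists c' : nat -> U,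
        (forall i, (i < n)%N -> c' i < c' i.+1) /\ (forall i, (i <= n)%N -> phi (c' i) = c i).
      by exists c'.
    elim: n Hc => [|n IH] Hc.
    * have [u Hu] := Hsurj (c 0%N); exists (fun _ => u); split => // [[|i]] //.
    * have [|c' [Hc1 Hc2]] := IH; first by move=> i Hi; apply: Hc; apply: ltnW.
      have Hle : phi (c' n) <= c n.+1 by rewrite Hc2 // ltW // Hc.
      have [y [Hy1 Hy2]] := Hup _ _ Hle.
      exists (fun i => if i == n.+1 then y else c' i); split.
      - move=> i Hi; rewrite (ltn_eqF Hi).
        have [ei|ni] := eqVneq i n.
        + rewrite ei /= eqxx lt_neqAle Hy1 andbT.
          apply/eqP => e; have := Hc n (ltnSn n).
          by rewrite -Hy2 -e Hc2 // ltxx.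
        + rewrite /= eqSS (negbTE ni); apply: Hc1.
          by rewrite ltn_neqAle ni -ltnS.
      - move=> i Hi; have [->|ni] := eqVneq i n.+1; first by [].
        by apply: Hc2; rewrite -ltnS ltn_neqAle ni.
- move=> u Hu v Hv.
  have [w Hw] := Hsurj v.
  have [Em|Nm] := boolP (phi u == m).
  + have [_ Hhu] := HM u (proj1 (Hfib u) (eqP Em)).
    by case: Hhu; apply: height_min.
  + have Hwl : phi w <= phi u by rewrite Hw.
    have [y [Hy1 Hy2]] := Hup w (phi u) Hwl.
    have Nm' : phi y <> m by move=> e; rewrite -Hy2 e eqxx in Nm.
    have ey := Hinj y u Hy2 Nm'.
    rewrite ey in Hy1.
    by rewrite -Hw (Hu _ Hy1).
- move=> v Hv; have [u Hu] := Hsurj v.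
  exists u; split => //.
  have Nm : v <> m.
    by move=> e; apply: Hh; rewrite -e; apply: height_min.
  move=> w Hw.
  have e : phi w = phi u by rewrite Hu; apply: Hv; rewrite -Hu Hhomo.
  by apply: Hinj => //; rewrite e Hu.
Qed.
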